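(* Let $G$ be a simple graph on $n$ vertices and let $k$ be an integer with $2 \le k \le n-2$. Then the $k$-token graph $F_k(G)$ is regular if and only if one of the following holds: (1) $G$ is isomorphic to the complete graph $K_n$; (2) $G$ is isomorphic to the empty graph $\overline{K_n}$ (the graph on $n$ vertices with no edges); (3) $G$ is isomorphic to the complete bipartite graph (star) $K_{1,n-1}$ and $k=n/2$; (4) $G$ is isomorphic to the complement $\overline{K_{1,n-1}}$ of the star and $k=n/2$.
   Context: For a simple graph $G=(V,E)$ on $n$ vertices and an integer $1\le k<n$, the $k$-token graph $F_k(G)$ is the graph whose vertices are all $k$-element subsets of $V$, two such subsets $A,B$ being adjacent whenever their symmetric difference $A\triangle B$ is a pair $\{a,b\}$ with $a$ adjacent to $b$ in $G$. *)

(* Defs.v *)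
(* A simple graph is a symmetric irreflexive relation e on a finType T. *)
From mathcomp Require Import all_boot.
Set Implicit Arguments. Unset Strict Implicit. Unset Printing Implicit Defensive.

Definition token_adj (T : finType) (e : rel T) (k : nat) (A B : {set T}) : bool :=
  [&& #|A| == k, #|B| == k &
   [exists a : T, exists b : T,
      e a b && ((A :\: B) :|: (B :\: A) == [set a; b])]].

Definition token_deg (T : finType) (e : rel T) (k : nat) (A : {set T}) : nat :=
  #|[set B : {set T} | token_adj e k A B]|.

Definition token_regular (T : finType) (e : rel T) (k : nat) : Prop :=
  exists d : nat, forall A : {set T}, #|A| = k -> token_deg e k A = d.

Definition graph_iso (T : finType) (e : rel T) (n : nat) (r : rel 'I_n) : Prop :=
  exists f : T -> 'I_n, bijective f /\ forall x y, e x y = r (f x) (f y).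

Definition complete_rel (n : nat) : rel 'I_n := fun i j => i != j.
Definition empty_rel (n : nat) : rel 'I_n := fun _ _ => false.
Definition star_rel (n : nat) : rel 'I_n :=
  fun i j => (i != j) && ((val i == 0) || (val j == 0)).
Definition costar_rel (n : nat) : rel 'I_n :=
  fun i j => (i != j) && ~~ ((val i == 0) || (val j == 0)).
Arguments complete_rel n : clear implicits.
Arguments empty_rel n : clear implicits.
Arguments star_rel n : clear implicits.
Arguments costar_rel n : clear implicits.

(* Main.v *)
Require Import Defs.
From mathcomp Require Import all_boot fingroup perm zify.
Set Implicit Arguments. Unset Strict Implicit. Unset Printing Implicit Defensive.

Lemma pt_id (ax ay az aw aS bx by_ bz bw bS eab : bool) :
  ax + ay + az + aw + aS <= 1 -> bx + by_ + bz + bw + bS <= 1 ->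
  [&& ax || (az || aS), ~~ (bx || (bz || bS)) & eab]
  + [&& ay || (aw || aS), ~~ (by_ || (bw || bS)) & eab]
  + (ax && bz && eab) + (az && bx && eab) + (ay && bw && eab) + (aw && by_ && eab)
  = [&& ay || (az || aS), ~~ (by_ || (bz || bS)) & eab]
  + [&& ax || (aw || aS), ~~ (bx || (bw || bS)) & eab]
  + (ay && bz && eab) + (az && by_ && eab) + (ax && bw && eab) + (aw && bx && eab).
Proof.
by case: eab; rewrite ?andbF /= ?addn0 //; case: ax; case: ay; case: az; case: aw; case: aS; case: bx; case: by_; case: bz; case: bw; case: bS.
Qed.

Lemma exists_sub (T : finType) (D : {set T}) m : m <= #|D| ->
  exists A : {set T}, A \subset D /\ #|A| = m.
Proof.
move=> hm; exists [set x | x \in take m (enum D)]; split.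
  apply/subsetP => x; rewrite inE => /mem_take; by rewrite mem_enum.
rewrite cardsE; move/card_uniqP: (take_uniq m (enum_uniq (mem D))) => ->.
by rewrite size_take -cardE; case: ltngtP hm => // ->.
Qed.

Section S.
Variables (T : finType) (e : rel T).
Hypothesis e_sym : symmetric e.
Hypothesis e_irr : irreflexive e.

Definition cutP (A : {set T}) := [set p : T * T | [&& p.1 \in A, p.2 \notin A & e p.1 p.2]].

Lemma deg_cut k (A : {set T}) : #|A| = k -> token_deg e k A = #|cutP A|.
Proof.
move=> hA; rewrite /token_deg.
pose phi := fun p : T * T => p.2 |: (A :\ p.1).
have -> : [set B | token_adj e k A B] = phi @: cutP A.
  apply/setP => B; rewrite inE /token_adj hA eqxx /=.
  apply/idP/imsetP.
  - case/andP => /eqP hB /existsP[a /existsP[b /andP[eab /eqP H]]].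
    have Ht t : (t \in A) != (t \in B) = (t == a) || (t == b).
      rewrite -in_set2 -H !inE.
      by case: (t \in A); case: (t \in B).
    have nab : a != b by apply: contraTneq eab => ->; rewrite e_irr.
    have Ha := Ht a; have Hb := Ht b; rewrite eqxx /= in Ha; rewrite eqxx orbT in Hb.
    have Ho t : t != a -> t != b -> (t \in A) = (t \in B).
      move=> ta tb; move: (Ht t); rewrite (negbTE ta) (negbTE tb) /=.
      by case: (t \in A); case: (t \in B).
    have {}Ha : (a \in B) = ~~ (a \in A) by move: Ha; case: (a \in A); case: (a \in B).
    have {}Hb : (b \in B) = ~~ (b \in A) by move: Hb; case: (b \in A); case: (b \in B).
    case aA: (a \in A); case bA: (b \in A); rewrite aA /= in Ha; rewrite bA /= in Hb.
    + have : B \proper A.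
        apply/properP; split; last by exists a => //; rewrite Ha.
        apply/subsetP => t tB; case: (eqVneq t a) => [ta|ta]; first by rewrite ta Ha in tB.
        case: (eqVneq t b) => [tb|tb]; first by rewrite tb Hb in tB.
        by rewrite Ho.
      by move/proper_card; rewrite hA hB ltnn.
    + exists (a, b); first by rewrite inE /= aA bA eab.
      apply/setP => t; rewrite /phi /= !inE.
      have nba : b != a by rewrite eq_sym.
      case: (eqVneq t a) => [->|ta]; first by rewrite ?Ha ?Hb ?aA ?bA ?eqxx ?(negbTE nab) ?(negbTE nba).
      case: (eqVneq t b) => [->|tb]; first by rewrite ?Ha ?Hb ?aA ?bA ?eqxx ?(negbTE nab) ?(negbTE nba).
      by rewrite /= Ho.
    + exists (b, a); first by rewrite inE /= aA bA e_sym eab.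
      apply/setP => t; rewrite /phi /= !inE.
      have nba : b != a by rewrite eq_sym.
      case: (eqVneq t a) => [->|ta]; first by rewrite ?Ha ?Hb ?aA ?bA ?eqxx ?(negbTE nab) ?(negbTE nba).
      case: (eqVneq t b) => [->|tb]; first by rewrite ?Ha ?Hb ?aA ?bA ?eqxx ?(negbTE nab) ?(negbTE nba).
      by rewrite /= Ho.
    + have : A \proper B.
        apply/properP; split; last by exists a => //; rewrite aA.
        apply/subsetP => t tA; case: (eqVneq t a) => [ta|ta]; first by rewrite ta aA in tA.
        case: (eqVneq t b) => [tb|tb]; first by rewrite tb bA in tA.
        by rewrite -Ho.
      by move/proper_card; rewrite hA hB ltnn.
  - case=> [[a b]]; rewrite inE /= => /and3P[aA bA eab] ->.
    have nab : a != b by apply: contraTneq eab => ->; rewrite e_irr.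
    apply/andP; split.
    + have bAa : b \notin A :\ a by rewrite !inE (negbTE bA) andbF.
      rewrite /phi /= cardsU1 bAa; have := cardsD1 a A; rewrite aA hA /=; lia.
    + apply/existsP; exists a; apply/existsP; exists b; rewrite eab /=.
      apply/eqP/setP => t; rewrite /phi /= !inE.
      case: (eqVneq t a) => [->|ta]; first by rewrite aA (negbTE nab).
      case: (eqVneq t b) => [->|tb] /=; first by rewrite (negbTE bA).
      by case: (t \in A).
rewrite card_in_imset // => -[a b] [a' b']; rewrite !inE /= /phi.
case/and3P => aA bA _ /and3P[a'A b'A _] H.
have hb : b' \in b |: (A :\ a) by rewrite H setU11.
rewrite !inE (negbTE b'A) andbF orbF in hb.
move: H; rewrite /= => H.
have ha : a \notin b' |: (A :\ a') by rewrite -H !inE eqxx /= orbF; apply/eqP => ab; rewrite -ab aA in bA.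
rewrite !inE aA andbT negb_or negbK in ha.
by case/andP: ha => _ /eqP ->; rewrite (eqP hb).
Qed.
End S.

Section S3.
Variables (T : finType) (e : rel T).
Hypothesis e_sym : symmetric e.
Hypothesis e_irr : irreflexive e.

Lemma c_sum (A : {set T}) :
  #|cutP e A| = \sum_(p : T * T) [&& p.1 \in A, p.2 \notin A & e p.1 p.2].
Proof.
rewrite -sum1_card big_mkcond /=; apply: eq_bigr => p _; rewrite inE.
by case: ifP.
Qed.

Lemma sum_pt (q : T * T) : \sum_(p : T * T) ((p == q) && e p.1 p.2) = e q.1 q.2.
Proof.
rewrite (bigD1 q) //= eqxx big1 ?addn0 // => p /negbTE ->; done.
Qed.

Lemma excl (x y z w : T) (S : {set T}) :
  x != y -> x != z -> x != w -> y != z -> y != w -> z != w ->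
  x \notin S -> y \notin S -> z \notin S -> w \notin S ->
  forall a, (a == x) + (a == y) + (a == z) + (a == w) + (a \in S) <= 1.
Proof.
move=> hxy hxz hxw hyz hyw hzw xS yS zS wS a.
case: (eqVneq a x) => [->|ax]; first by rewrite (negbTE hxy) (negbTE hxz) (negbTE hxw) (negbTE xS).
case: (eqVneq a y) => [->|ay]; first by rewrite (negbTE hyz) (negbTE hyw) (negbTE yS).
case: (eqVneq a z) => [->|az]; first by rewrite (negbTE hzw) (negbTE zS).
case: (eqVneq a w) => [->|aw]; first by rewrite (negbTE wS).
by case: (a \in S).
Qed.

Lemma four (d : nat) (x y z w : T) (S : {set T}) :
  #|cutP e (x |: (z |: S))| = d -> #|cutP e (y |: (w |: S))| = d ->
  #|cutP e (y |: (z |: S))| = d -> #|cutP e (x |: (w |: S))| = d ->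
  x != y -> x != z -> x != w -> y != z -> y != w -> z != w ->
  x \notin S -> y \notin S -> z \notin S -> w \notin S ->
  e x z + e y w = e y z + e x w.
Proof.
move=> h1 h2 h3 h4 hxy hxz hxw hyz hyw hzw xS yS zS wS.
have Ex := excl hxy hxz hxw hyz hyw hzw xS yS zS wS.
have E : \sum_(p : T * T) ([&& p.1 \in x |: (z |: S), p.2 \notin x |: (z |: S) & e p.1 p.2]
    + [&& p.1 \in y |: (w |: S), p.2 \notin y |: (w |: S) & e p.1 p.2]
    + ((p == (x, z)) && e p.1 p.2) + ((p == (z, x)) && e p.1 p.2)
    + ((p == (y, w)) && e p.1 p.2) + ((p == (w, y)) && e p.1 p.2))
  = \sum_(p : T * T) ([&& p.1 \in y |: (z |: S), p.2 \notin y |: (z |: S) & e p.1 p.2]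
    + [&& p.1 \in x |: (w |: S), p.2 \notin x |: (w |: S) & e p.1 p.2]
    + ((p == (y, z)) && e p.1 p.2) + ((p == (z, y)) && e p.1 p.2)
    + ((p == (x, w)) && e p.1 p.2) + ((p == (w, x)) && e p.1 p.2)).
  apply: eq_bigr => -[a b] _ /=; rewrite !inE !xpair_eqE.
  by apply: pt_id.
rewrite !big_split /= -!c_sum !sum_pt /= in E.
rewrite h1 h2 h3 h4 (e_sym z x) (e_sym w y) (e_sym z y) (e_sym w x) in E.
clear -E; move: E; move: (e x z) (e y w) (e y z) (e x w) => [] [] [] []; lia.
Qed.
End S3.

Section S4.
Variables (T : finType) (e : rel T).
Hypothesis e_sym : symmetric e.
Hypothesis e_irr : irreflexive e.
Hypothesis P4 : forall x y z w : T, x != y -> x != z -> x != w -> y != z -> y != w -> z != w ->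
  e x z + e y w = e y z + e x w.

Definition classif :=
  [\/ (forall a b, e a b = (a != b)), (forall a b, e a b = false),
      (exists c, forall a b, e a b = (a != b) && ((a == c) || (b == c)))
    | (exists c, forall a b, e a b = (a != b) && ~~ ((a == c) || (b == c)))].

Lemma L_yes x y v : x != y -> x != v -> y != v -> e x v -> ~~ e y v -> classif.
Proof.
move=> xy xv yv exv eyv.
have h1 w : w != x -> w != y -> e x w && ~~ e y w.
  move=> wx wy; case: (eqVneq w v) => [->|wv]; first by rewrite exv.
  have xw : x != w by rewrite eq_sym.
  have yw : y != w by rewrite eq_sym.
  have vw : v != w by rewrite eq_sym.
  have := P4 xy xv xw yv yw vw; rewrite exv (negbTE eyv).
  by case: (e y w); case: (e x w).
have h2 z w : z != x -> z != y -> w != x -> w != y -> z != w -> e z w = ~~ e x y.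
  move=> zx zy wx wy zw.
  have yx : y != x by rewrite eq_sym.
  have xw : x != w by rewrite eq_sym.
  have yw : y != w by rewrite eq_sym.
  have := P4 zy zx zw yx yw xw.
  rewrite e_sym (e_sym y x); case/andP: (h1 z zx zy) => -> _; case/andP: (h1 w wx wy) => _ /negbTE ->.
  by case: (e x y); case: (e z w).
case exy: (e x y).
- constructor 3; exists x => a b.
  case: (eqVneq a b) => [->|ab]; first by rewrite e_irr.
  case: (eqVneq a x) => [?|ax]; [subst a|].
    case: (eqVneq b y) => [?|by_]; [subst b|]; first by rewrite exy.
    have bx : b != x by rewrite eq_sym.
    by rewrite /=; case/andP: (h1 b bx by_) => ->.
  case: (eqVneq b x) => [?|bx]; [subst b|].
    rewrite e_sym /=; case: (eqVneq a y) => [?|ay]; [subst a|]; first by rewrite exy.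
    by case/andP: (h1 a ax ay) => ->.
  case: (eqVneq a y) => [?|ay]; [subst a|].
    have by_ : b != y by rewrite eq_sym.
    by rewrite /=; case/andP: (h1 b bx by_) => _ /negbTE ->.
  case: (eqVneq b y) => [?|by_]; [subst b|].
    by rewrite e_sym /=; case/andP: (h1 a ax ay) => _ /negbTE ->.
  by rewrite (h2 a b ax ay bx by_ ab) exy.
- constructor 4; exists y => a b.
  case: (eqVneq a b) => [->|ab]; first by rewrite e_irr.
  case: (eqVneq a y) => [?|ay]; [subst a|].
    case: (eqVneq b x) => [?|bx]; [subst b|]; first by rewrite e_sym exy.
    have by_ : b != y by rewrite eq_sym.
    by rewrite /=; case/andP: (h1 b bx by_) => _ /negbTE ->.
  case: (eqVneq b y) => [?|by_]; [subst b|].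
    rewrite e_sym /=; case: (eqVneq a x) => [?|ax]; [subst a|]; first by rewrite e_sym exy.
    by case/andP: (h1 a ax ay) => _ /negbTE ->.
  case: (eqVneq a x) => [?|ax]; [subst a|].
    have bx : b != x by rewrite eq_sym.
    by rewrite /=; case/andP: (h1 b bx by_) => ->.
  case: (eqVneq b x) => [?|bx]; [subst b|].
    by rewrite e_sym /=; case/andP: (h1 a ax ay) => ->.
  by rewrite (h2 a b ax ay bx by_ ab) exy.
Qed.

Lemma classify : classif.
Proof.
case: (boolP [exists x, exists y, exists v, [&& x != y, x != v, y != v & e x v != e y v]]).
- case/existsP => x /existsP[y /existsP[v /and4P[xy xv yv hne]]].
  case exv: (e x v).
    apply: (L_yes xy xv yv exv); by move: hne; rewrite exv; case: (e y v).
  have eyv : e y v by move: hne; rewrite exv; case: (e y v).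
  have yx : y != x by rewrite eq_sym.
  by apply: (L_yes yx yv xv eyv); rewrite exv.
- move=> hn.
  have twin x y v : x != y -> x != v -> y != v -> e x v = e y v.
    move=> xy xv yv; apply/eqP/negPn/negP => hne; move/negP: hn; apply.
    by apply/existsP; exists x; apply/existsP; exists y; apply/existsP; exists v; rewrite xy xv yv hne.
  have L0 a b c : a != b -> a != c -> e a b = e a c.
    move=> ab ac; case: (eqVneq b c) => [->//|bc].
    have ba : b != a by rewrite eq_sym.
    have ca : c != a by rewrite eq_sym.
    by rewrite e_sym (twin b c a bc ba ca) e_sym.
  have same x y u v : x != y -> u != v -> e x y = e u v.
    move=> xy uv; case: (eqVneq x u) => [?|xu]; first by subst u; apply: L0.
    case: (eqVneq u y) => [uy|uy].
      subst u; have yx : y != x by rewrite eq_sym.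
      by rewrite e_sym; apply: L0.
    by rewrite (twin x u y xu xy uy); apply: L0.
  case: (boolP [exists a, exists b, e a b]).
  + case/existsP => a0 /existsP[b0 eab].
    have a0b0 : a0 != b0 by apply: contraTneq eab => ->; rewrite e_irr.
    constructor 1 => a b; case: (eqVneq a b) => [->|ab]; first by rewrite e_irr.
    by rewrite (same a b a0 b0 ab a0b0) eab.
  + move=> hn2; constructor 2 => a b; apply/negbTE/negP => eab; move/negP: hn2; apply.
    by apply/existsP; exists a; apply/existsP; exists b.
Qed.
End S4.

Section S5.
Variables (T : finType) (e : rel T).

Lemma neq_in (A : {set T}) a b : a \in A -> b \notin A -> a != b.
Proof. by move=> aA; apply: contraNneq => <-. Qed.

Lemma cardC' (A : {set T}) : #|~: A| = #|T| - #|A|.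
Proof. have := cardsC A; lia. Qed.

Lemma cut_complete (A : {set T}) : (forall a b, e a b = (a != b)) ->
  #|cutP e A| = #|A| * (#|T| - #|A|).
Proof.
move=> he; rewrite -cardC' -cardsX; apply: eq_card => -[a b]; rewrite !inE /= he.
case aA: (a \in A); case bA: (b \in A) => //=.
by rewrite (neq_in aA) ?bA.
Qed.

Lemma cut_empty (A : {set T}) : (forall a b, e a b = false) -> #|cutP e A| = 0.
Proof.
move=> he; apply/eqP; rewrite cards_eq0; apply/eqP/setP => p; by rewrite !inE he !andbF.
Qed.

Lemma cut_star (A : {set T}) c : (forall a b, e a b = (a != b) && ((a == c) || (b == c))) ->
  #|cutP e A| = if c \in A then #|T| - #|A| else #|A|.
Proof.
move=> he; case: ifP => cA.
- rewrite -cardC' -(mul1n #|~: A|) -(cards1 c) -cardsX; apply: eq_card => -[a b].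
  rewrite !inE /= he.
  case: (eqVneq a c) => [?|ac]; first subst a.
    rewrite cA /=; case bA: (b \in A) => //=; by rewrite (neq_in cA) ?bA.
  case: (eqVneq b c) => [?|bc]; first subst b; by rewrite ?cA !andbF.
- rewrite -(muln1 #|A|) -(cards1 c) -cardsX; apply: eq_card => -[a b].
  rewrite !inE /= he.
  case: (eqVneq b c) => [?|bc]; first subst b.
    rewrite cA /= orbT andbT; case aA: (a \in A) => //=; by rewrite (neq_in aA) ?cA.
  case: (eqVneq a c) => [?|ac]; first subst a; by rewrite ?cA !andbF.
Qed.

Lemma cut_costar (A : {set T}) c : (forall a b, e a b = (a != b) && ~~ ((a == c) || (b == c))) ->
  #|cutP e A| = if c \in A then (#|A| - 1) * (#|T| - #|A|) else #|A| * (#|T| - #|A| - 1).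
Proof.
move=> he; case: ifP => cA.
- have -> : #|A| - 1 = #|A :\ c| by rewrite (cardsD1 c A) cA; lia.
  rewrite -cardC' -cardsX; apply: eq_card => -[a b].
  rewrite !inE /= he.
  case: (eqVneq a c) => [?|ac]; first subst a.
    by rewrite ?eqxx ?cA /= ?orbT ?andbF.
  case: (eqVneq b c) => [?|bc]; first subst b.
    by rewrite ?eqxx ?cA /= ?orbT ?andbF.
  rewrite /= ?orbF ?andbT.
  case aA: (a \in A); case bA: (b \in A) => //=.
  by rewrite (neq_in aA) ?bA.
- have -> : #|T| - #|A| - 1 = #|~: A :\ c| by have := cardsD1 c (~: A); rewrite inE cA cardC' /=; lia.
  rewrite -cardsX; apply: eq_card => -[a b].
  rewrite !inE /= he.
  case: (eqVneq a c) => [?|ac]; first subst a.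
    by rewrite ?eqxx ?cA /= ?orbT ?andbF.
  case: (eqVneq b c) => [?|bc]; first subst b.
    by rewrite ?eqxx ?cA /= ?orbT ?andbF.
  rewrite /= ?orbF ?andbT.
  case aA: (a \in A); case bA: (b \in A) => //=.
  by rewrite (neq_in aA) ?bA.
Qed.
End S5.

Section S6.
Variables (T : finType) (e : rel T).

Lemma iso_char_complete : graph_iso e (complete_rel #|T|) -> forall a b, e a b = (a != b).
Proof. by case=> f [fb he] a b; rewrite he /complete_rel (inj_eq (bij_inj fb)). Qed.

Lemma iso_char_empty : graph_iso e (empty_rel #|T|) -> forall a b, e a b = false.
Proof. by case=> f [fb he] a b; rewrite he. Qed.

Lemma iso_hv (f : T -> 'I_#|T|) (g : 'I_#|T| -> T) (n0 : 0 < #|T|) :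
  cancel f g -> cancel g f ->
  forall x, (val (f x) == 0) = (x == g (Ordinal n0)).
Proof.
move=> fg gf x.
by rewrite -[0]/(val (Ordinal n0)) val_eqE -[X in f x == X](gf (Ordinal n0)) (inj_eq (can_inj fg)).
Qed.

Lemma iso_char_star : 0 < #|T| -> graph_iso e (star_rel #|T|) ->
  exists c, forall a b, e a b = (a != b) && ((a == c) || (b == c)).
Proof.
move=> n0 [f [[g fg gf] he]]; exists (g (Ordinal n0)) => a b.
by rewrite he /star_rel (inj_eq (can_inj fg)) !(iso_hv n0 fg gf).
Qed.

Lemma iso_char_costar : 0 < #|T| -> graph_iso e (costar_rel #|T|) ->
  exists c, forall a b, e a b = (a != b) && ~~ ((a == c) || (b == c)).
Proof.
move=> n0 [f [[g fg gf] he]]; exists (g (Ordinal n0)) => a b.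
by rewrite he /costar_rel (inj_eq (can_inj fg)) !(iso_hv n0 fg gf).
Qed.

Lemma char_iso (r : rel 'I_#|T|) (f : T -> 'I_#|T|) (g : 'I_#|T| -> T) :
  cancel f g -> cancel g f -> (forall x y, e x y = r (f x) (f y)) -> graph_iso e r.
Proof. by move=> fg gf he; exists f; split => //; exists g. Qed.

Lemma char_iso_complete : (forall a b, e a b = (a != b)) -> graph_iso e (complete_rel #|T|).
Proof.
move=> he; apply: (char_iso (@enum_rankK T) (@enum_valK T)) => x y.
by rewrite he /complete_rel (inj_eq enum_rank_inj).
Qed.

Lemma char_iso_empty : (forall a b, e a b = false) -> graph_iso e (empty_rel #|T|).
Proof.
move=> he; by apply: (char_iso (@enum_rankK T) (@enum_valK T)) => x y; rewrite he.
Qed.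

Lemma perm_c (c : T) : exists f : T -> 'I_#|T|, exists g : 'I_#|T| -> T,
  [/\ cancel f g, cancel g f & forall x, (val (f x) == 0) = (x == c)].
Proof.
have n0 : 0 < #|T| by apply/card_gt0P; exists c.
pose i0 : 'I_#|T| := Ordinal n0.
pose f x := tperm (enum_rank c) i0 (enum_rank x).
pose g i := enum_val (tperm (enum_rank c) i0 i).
have fg : cancel f g by move=> x; rewrite /f /g tpermK enum_rankK.
have gf : cancel g f by move=> i; rewrite /f /g enum_valK tpermK.
exists f, g; split => // x.
have fc : f c = i0 by rewrite /f tpermL.
by rewrite -[0]/(val i0) val_eqE -fc (inj_eq (can_inj fg)).
Qed.

Lemma char_iso_star c : (forall a b, e a b = (a != b) && ((a == c) || (b == c))) ->
  graph_iso e (star_rel #|T|).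
Proof.
move=> he; have [f [g [fg gf hv]]] := perm_c c.
by apply: (char_iso fg gf) => x y; rewrite he /star_rel (inj_eq (can_inj fg)) !hv.
Qed.

Lemma char_iso_costar c : (forall a b, e a b = (a != b) && ~~ ((a == c) || (b == c))) ->
  graph_iso e (costar_rel #|T|).
Proof.
move=> he; have [f [g [fg gf hv]]] := perm_c c.
by apply: (char_iso fg gf) => x y; rewrite he /costar_rel (inj_eq (can_inj fg)) !hv.
Qed.

Lemma sets_c (c : T) k : 1 <= k -> k <= #|T| - 1 ->
  (exists A : {set T}, c \in A /\ #|A| = k) /\ (exists A : {set T}, c \notin A /\ #|A| = k).
Proof.
move=> k1 kn.
have hD : #|[set: T] :\ c| = #|T| - 1 by have := cardsD1 c [set: T]; rewrite inE cardsT; lia.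
split.
- have [S [SD hS]] : exists S : {set T}, S \subset [set: T] :\ c /\ #|S| = k - 1.
    by apply: exists_sub; rewrite hD; lia.
  have cS : c \notin S by apply/negP => /(subsetP SD); rewrite !inE eqxx.
  exists (c |: S); split; first by rewrite setU11.
  by rewrite cardsU1 cS hS; lia.
- have [S [SD hS]] : exists S : {set T}, S \subset [set: T] :\ c /\ #|S| = k.
    by apply: exists_sub; rewrite hD.
  have cS : c \notin S by apply/negP => /(subsetP SD); rewrite !inE eqxx.
  by exists S.
Qed.

Lemma card_U1_le a (B : {set T}) : #|a |: B| <= #|B| + 1.
Proof. by rewrite cardsU1 addnC leq_add2l leq_b1. Qed.
End S6.
Unset Implicit Arguments.

Lemma ar_costar (k m d : nat) : k.-1 * m = d -> k * m.-1 = d -> 0 < k -> 0 < m -> k = m.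
Proof.
case: k => // k; case: m => // m /= <-; rewrite mulSn mulnS => /eqP; rewrite eqn_add2r => /eqP -> _ _.
done.
Qed.

Theorem theorem1 (T : finType) (e : rel T) (k : nat)
  (e_sym : symmetric e) (e_irr : irreflexive e)
  (hk2 : 2 <= k) (hkn : k <= #|T| - 2) :
  token_regular e k <->
  [\/ graph_iso e (complete_rel #|T|),
      graph_iso e (empty_rel #|T|),
      graph_iso e (star_rel #|T|) /\ #|T| = 2 * k
    | graph_iso e (costar_rel #|T|) /\ #|T| = 2 * k].
Proof.
have n0 : 0 < #|T| by lia.
split.
- case=> d hd.
  have hc (A : {set T}) : #|A| = k -> #|cutP e A| = d.
    by move=> hA; rewrite -(deg_cut e_sym e_irr hA); exact: hd.
  have P4 : forall x y z w : T, x != y -> x != z -> x != w -> y != z -> y != w -> z != w ->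
      e x z + e y w = e y z + e x w.
    move=> x y z w hxy hxz hxw hyz hyw hzw.
    pose D := ~: (x |: (y |: (z |: [set w]))).
    have hD : k - 2 <= #|D|.
      rewrite /D cardC'.
      have := card_U1_le x (y |: (z |: [set w])); have := card_U1_le y (z |: [set w]);
      have := card_U1_le z [set w]; rewrite cards1; clear -hk2 hkn; lia.
    have [S [SD hS]] := exists_sub hD.
    have nS t : t \in x |: (y |: (z |: [set w])) -> t \notin S.
      move=> ht; apply/negP => /(subsetP SD); by rewrite /D inE ht.
    have xS : x \notin S by apply: nS; rewrite !inE eqxx.
    have yS : y \notin S by apply: nS; rewrite !inE eqxx !orbT.
    have zS : z \notin S by apply: nS; rewrite !inE eqxx !orbT.
    have wS : w \notin S by apply: nS; rewrite !inE eqxx !orbT.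
    have hA u v : u \notin S -> v \notin S -> u != v -> #|u |: (v |: S)| = k.
      move=> uS vS uv; rewrite !cardsU1 !inE negb_or uv uS vS hS /=; clear -hk2 hkn; lia.
    apply: (four e_sym (hc _ (hA _ _ xS zS hxz)) (hc _ (hA _ _ yS wS hyw))
                       (hc _ (hA _ _ yS zS hyz)) (hc _ (hA _ _ xS wS hxw))) => //.
  case: (classify e_sym e_irr P4) => [he|he|[c he]|[c he]].
  + by constructor 1; apply: char_iso_complete.
  + by constructor 2; apply: char_iso_empty.
  + constructor 3; split; first exact: char_iso_star he.
    have [[A [cA hA]] [B [cB hB]]] := sets_c c (ltnW hk2) (leq_trans hkn (leq_sub2l _ (isT : 1 <= 2))).
    have := hc A hA; have := hc B hB; rewrite !(cut_star _ he) (negbTE cB) cA hA hB; clear -hk2 hkn; lia.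
  + constructor 4; split; first exact: char_iso_costar he.
    have [[A [cA hA]] [B [cB hB]]] := sets_c c (ltnW hk2) (leq_trans hkn (leq_sub2l _ (isT : 1 <= 2))).
    have := hc A hA; have := hc B hB; rewrite !(cut_costar _ he) (negbTE cB) cA hA hB !subn1 => h1 h2.
    have := @ar_costar _ _ _ h2 h1; clear -hk2 hkn; lia.
- case=> [h|h|[h hn]|[h hn]].
  + exists (k * (#|T| - k)) => A hA.
    by rewrite (deg_cut e_sym e_irr hA) (cut_complete _ (iso_char_complete h)) hA.
  + exists 0 => A hA.
    by rewrite (deg_cut e_sym e_irr hA) (cut_empty _ (iso_char_empty h)).
  + have [c he] := iso_char_star n0 h.
    exists k => A hA; rewrite (deg_cut e_sym e_irr hA) (cut_star _ he) hA; case: ifP => _; clear -hk2 hkn hn; lia.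
  + have [c he] := iso_char_costar n0 h.
    exists (k * (k - 1)) => A hA; rewrite (deg_cut e_sym e_irr hA) (cut_costar _ he) hA hn.
    have -> : 2 * k - k = k by lia.
    case: ifP => _; first by rewrite mulnC.
    by [].
Qed.
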